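(* Let $n\geq 5$ be an odd integer. Then $\beta_2^s(J_n)=n+5$.
   Context: Flower snark $J_n$ ($n\geq 5$ odd): take $n$ disjoint stars $K_{1,3}$, the $i$th with vertices $T_i=\{a_i,b_i,c_i,d_i\}$, centre $b_i$ and leaves $a_i,c_i,d_i$; add the cycle $a_1a_2\cdots a_na_1$ and the cycle $c_1c_2\cdots c_nd_1d_2\cdots d_nc_1$. $d$ is the shortest-path distance, $d(s,X)=\min_{x\in X}d(s,x)$ for nonempty $X$, $\mathcal{D}_S(X)=(d(s_1,X),\dots,d(s_k,X))$. $S$ is a $2$-solid-resolving set if $\mathcal{D}_S(X)\neq\mathcal{D}_S(Y)$ for all distinct nonempty vertex sets $X,Y$ with $|X|\leq 2$ ($Y$ of arbitrary size); $\beta_2^s(J_n)$ is the minimum size of such a set. *)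

(* Defs.v *)
From mathcomp Require Import all_boot.
Set Implicit Arguments. Unset Strict Implicit. Unset Printing Implicit Defensive.

Section GraphDist.
Variables (T : finType) (adj : rel T).

Definition ball (k : nat) (x : T) : {set T} :=
  iter k (fun A : {set T} => A :|: [set y | [exists z in A, adj z y]]) [set x].

(* shortest-path distance: least k with y in ball k x
   (equals #|T| if y is unreachable; the flower snark is connected) *)
Definition gdist (x y : T) : nat :=
  find (fun k => y \in ball k x) (iota 0 #|T|).

(* d(s, X) = min_{x in X} d(s, x)  (used for nonempty X only) *)
Definition setdist (s : T) (X : {set T}) : nat :=
  \big[minn/#|T|]_(x in X) gdist s x.

(* S is 2-solid-resolving: D_S(X) <> D_S(Y) for all distinct nonempty X, Y
   with |X| <= 2; D_S(X) = D_S(Y) iff d(s,X) = d(s,Y) for every s in S *)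
Definition solid2_resolving (S : {set T}) : Prop :=
  forall X Y : {set T}, X != set0 -> Y != set0 -> X != Y -> #|X| <= 2 ->
    exists2 s, s \in S & setdist s X != setdist s Y.

End GraphDist.

(* vertex (t, i): t = 0,1,2,3 stands for a,b,c,d ; i : 'I_n is the index
   (0-based: index i here is i+1 in the paper). *)
Definition Jvert (n : nat) := ('I_4 * 'I_n)%type.

Definition Jarc (n : nat) (u v : Jvert n) : bool :=
  let t := nat_of_ord u.1 in let i := nat_of_ord u.2 in
  let t' := nat_of_ord v.1 in let j := nat_of_ord v.2 in
  [|| (t == 1) && (t' != 1) && (i == j)
    , (t == 0) && (t' == 0) && (j == (i.+1 %% n))
    , (t == 2) && (t' == 2) && (j == i.+1)
    , (t == 2) && (t' == 3) && (i == n.-1) && (j == 0)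
    , (t == 3) && (t' == 3) && (j == i.+1)
    | (t == 3) && (t' == 2) && (i == n.-1) && (j == 0) ].

Definition Jadj (n : nat) : rel (Jvert n) := fun u v => Jarc u v || Jarc v u.

(* Main.v *)
Require Import Defs.
From Stdlib Require Import ZArith Lia Classical.
From mathcomp Require Import all_boot zify.
Set Implicit Arguments. Unset Strict Implicit. Unset Printing Implicit Defensive.

Section Gen.
Variables (T : finType) (adj : rel T).

Lemma ballS k x : ball adj k.+1 x = ball adj k x :|: [set y | [exists z in ball adj k x, adj z y]].
Proof. by []. Qed.

Lemma ball0 x : ball adj 0 x = [set x].
Proof. by []. Qed.

Lemma ball_step k x z y : z \in ball adj k x -> adj z y -> y \in ball adj k.+1 x.
Proof.
move=> Hz Hzy; rewrite ballS inE; apply/orP; right; rewrite inE.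
by apply/existsP; exists z; rewrite Hz Hzy.
Qed.

Lemma gdist_leN s v : (gdist adj s v <= #|T|)%N.
Proof. by rewrite /gdist -[X in (_ <= X)%N](size_iota 0 #|T|) find_size. Qed.

Lemma gdist_le s v k : (k < #|T|)%N -> v \in ball adj k s -> (gdist adj s v <= k)%N.
Proof.
move=> Hk Hv; rewrite leqNgt; apply/negP => Hlt.
have := before_find 0%N Hlt; rewrite nth_iota // add0n Hv //.
Qed.

Lemma gdist_ball s v : (gdist adj s v < #|T|)%N -> v \in ball adj (gdist adj s v) s.
Proof.
move=> H.
have Hh : has (fun k => v \in ball adj k s) (iota 0 #|T|).
  by rewrite has_find size_iota.
have := nth_find 0%N Hh; rewrite nth_iota //.
Qed.

Lemma gdist_refl s : gdist adj s s = 0%N.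
Proof.
apply/eqP; rewrite -leqn0; apply: gdist_le; last by rewrite ball0 inE.
by apply/card_gt0P; exists s.
Qed.

Lemma gdist0 s v : gdist adj s v = 0%N -> v = s.
Proof.
move=> H.
have Hlt : (gdist adj s v < #|T|)%N by rewrite H; apply/card_gt0P; exists s.
by have := gdist_ball Hlt; rewrite H ball0 inE => /eqP.
Qed.

Lemma gdist_adj s w v : adj w v -> (gdist adj s v <= (gdist adj s w).+1)%N.
Proof.
move=> Hwv.
case: (ltnP (gdist adj s w) #|T|) => Hw.
  have Hb := ball_step (gdist_ball Hw) Hwv.
  case: (ltnP (gdist adj s w).+1 #|T|) => H1.
    exact: gdist_le H1 Hb.
  by apply: leq_trans (gdist_leN s v) H1.
by apply: leq_trans (gdist_leN s v) _; apply: leq_trans Hw _.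
Qed.

Lemma gdist_pred s v : (gdist adj s v < #|T|)%N -> v != s ->
  exists2 w, adj w v & (gdist adj s w).+1 = gdist adj s v.
Proof.
move=> Hlt Hne.
have Hb := gdist_ball Hlt.
move: Hb Hlt; case E: (gdist adj s v) => [|k] Hb Hlt.
  by move: Hb; rewrite ball0 inE (negbTE Hne).
move: Hb; rewrite ballS inE => /orP [Hk|].
  have := gdist_le (ltnW Hlt) Hk; rewrite E ltnn //.
rewrite inE => /existsP [z /andP [Hz Hzv]].
exists z => //.
have H1 := gdist_le (ltnW Hlt) Hz.
have H2 := gdist_adj s Hzv. rewrite E in H2.
by apply/eqP; rewrite eqSS eqn_leq H1 -ltnS H2.
Qed.

Lemma gdist_char (s : T) (f : T -> Z) :
  f s = 0%Z ->
  (forall u v, adj u v -> (f v <= f u + 1)%Z) ->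
  (forall v, v != s -> exists2 w, adj w v & (f w + 1 = f v)%Z) ->
  (forall v, 0 <= f v < Z.of_nat #|T|)%Z ->
  forall v, Z.of_nat (gdist adj s v) = f v.
Proof.
move=> Hs Hlip Hpred Hb.
have up : forall m v, Z.to_nat (f v) = m -> (Z.of_nat (gdist adj s v) <= f v)%Z.
  elim/ltn_ind => m IH v Hm.
  case: (eqVneq v s) => [->|Hne]; first by rewrite gdist_refl Hs.
  have [w Hwv Hw] := Hpred v Hne.
  have Hw' := IH (Z.to_nat (f w)) _ w erefl.
  have := gdist_adj s Hwv.
  have Hbw := Hb w. have Hbv := Hb v.
  move=> Hle.
  have : (Z.to_nat (f w) < m)%N by apply/ltP; lia.
  move=> /Hw' {}Hw'. 
  have : (gdist adj s v <= (gdist adj s w).+1)%coq_nat by apply/leP.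
  lia.
have lo : forall m v, gdist adj s v = m -> (f v <= Z.of_nat (gdist adj s v))%Z.
  elim/ltn_ind => m IH v Hm.
  case: (eqVneq v s) => [->|Hne]; first by rewrite gdist_refl Hs.
  have Hlt : (gdist adj s v < #|T|)%N.
    have := up _ v erefl. have := Hb v. move=> ? ?. apply/ltP; lia.
  have [w Hwv Hw] := gdist_pred Hlt Hne.
  have : (gdist adj s w < m)%N by rewrite -Hm -Hw.
  move=> /(IH _) /(_ w erefl) Hw'.
  have := Hlip _ _ Hwv. rewrite -Hw. lia.
move=> v; have := up _ v erefl; have := lo _ v erefl; lia.
Qed.

Lemma bigmin_seq (F : T -> nat) (r : seq T) : (forall x, F x <= #|T|)%N ->
  (forall x, x \in r -> (\big[minn/#|T|]_(x <- r) F x <= F x)%N) /\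
  ((\big[minn/#|T|]_(x <- r) F x = #|T|) \/ exists2 x, x \in r & \big[minn/#|T|]_(x <- r) F x = F x).
Proof.
move=> HF; elim: r => [|y r [IH1 IH2]]; first by rewrite big_nil; split => //; left.
rewrite big_cons; split.
  move=> x; rewrite inE => /orP [/eqP ->|Hx]; first exact: geq_minl.
  by apply: leq_trans (geq_minr _ _) (IH1 _ Hx).
right; case: IH2 => [->|[x Hx ->]].
  by exists y; rewrite ?mem_head //; have := HF y; lia.
case: (leqP (F y) (F x)) => H.
  by exists y; rewrite ?mem_head //; lia.
by exists x; rewrite ?inE ?Hx ?orbT //; lia.
Qed.

Lemma setdist_le s (X : {set T}) x : x \in X -> (setdist adj s X <= gdist adj s x)%N.
Proof.
move=> Hx; rewrite /setdist -big_filter /=.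
by case: (bigmin_seq [seq i <- index_enum T | i \in X] (gdist_leN s)) => H _; apply: H; rewrite mem_filter Hx mem_index_enum.
Qed.

Lemma setdist_ex s (X : {set T}) : X != set0 -> exists2 x, x \in X & setdist adj s X = gdist adj s x.
Proof.
move=> /set0Pn [x0 Hx0]; rewrite /setdist -big_filter /=.
have Hm : forall x, (x \in [seq i <- index_enum T | i \in X]) = (x \in X).
  by move=> x; rewrite mem_filter mem_index_enum andbT.
case: (bigmin_seq [seq i <- index_enum T | i \in X] (gdist_leN s)) => H1 [H2|[x Hx H2]].
  exists x0 => //; apply/eqP; rewrite eqn_leq H1 ?Hm // H2.
  exact: gdist_leN.
by exists x; rewrite -?Hm.
Qed.


Lemma card3 (X : {set T}) a b c : a \in X -> b \in X -> c \in X ->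
  a != b -> a != c -> b != c -> (2 < #|X|)%N.
Proof.
move=> Ha Hb Hc Hab Hac Hbc.
have Hs : c |: [set a; b] \subset X.
  by apply/subsetP => z; rewrite !inE => /orP [/eqP -> // | /orP [] ] /eqP ->.
apply: leq_trans (subset_leq_card Hs).
by rewrite cardsU1 cards2 !inE negb_or eq_sym Hac eq_sym Hbc Hab.
Qed.

Lemma card4 (X : {set T}) a b c d : a \in X -> b \in X -> c \in X -> d \in X ->
  a != b -> a != c -> b != c -> d != a -> d != b -> d != c -> (3 < #|X|)%N.
Proof.
move=> Ha Hb Hc Hd Hab Hac Hbc Hda Hdb Hdc.
have Hs : d |: (c |: [set a; b]) \subset X.
  by apply/subsetP => z; rewrite !inE => /orP [/eqP -> // | /orP [/eqP -> // | /orP [] ] ] /eqP ->.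
apply: leq_trans (subset_leq_card Hs).
by rewrite cardsU1 cardsU1 cards2 !inE !negb_or Hdc Hda Hdb (eq_sym c a) Hac (eq_sym c b) Hbc Hab.
Qed.

Lemma card_disjU (A B : {set T}) : (forall x, x \in A -> x \notin B) -> #|A :|: B| = (#|A| + #|B|)%N.
Proof.
move=> H; rewrite cardsU.
have -> : A :&: B = set0.
  apply/setP => x; rewrite !inE; case: (boolP (x \in A)) => // /H.
  by case: (x \in B).
by rewrite cards0 subn0.
Qed.

Lemma solid_sep (S : {set T}) : solid2_resolving adj S -> forall y x1 x2, x1 != y -> x2 != y ->
  exists2 s, s \in S & (gdist adj s y < gdist adj s x1)%N && (gdist adj s y < gdist adj s x2)%N.
Proof.
move=> HS y x1 x2 H1 H2.
set X := [set x1; x2]; set Y := y |: X.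
have Hx1 : x1 \in X by rewrite !inE eqxx.
have HyX : y \notin X by rewrite !inE negb_or eq_sym H1 eq_sym H2.
have HX : X != set0 by apply/set0Pn; exists x1.
have HY : Y != set0 by apply/set0Pn; exists y; rewrite !inE eqxx.
have HXY : X != Y by apply/eqP => E; move: HyX; rewrite E !inE eqxx.
have HcX : (#|X| <= 2)%N by rewrite cards2; case: (x1 != x2).
have [s Hs Hne] := HS X Y HX HY HXY HcX.
exists s => //.
have [xs Hxs Exs] := setdist_ex s HX.
have HYle : (setdist adj s Y <= setdist adj s X)%N by rewrite Exs; apply: setdist_le; rewrite inE Hxs orbT.
have [z Hz Ez] := setdist_ex s HY.
move: Hz; rewrite in_setU1 => /orP [/eqP Ezy|HzX].
  rewrite Ezy in Ez.
  have Hlt : (gdist adj s y < setdist adj s X)%N by rewrite -Ez ltn_neqAle HYle andbT eq_sym.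
  by rewrite (leq_trans Hlt (setdist_le s (x:=x1) _)) ?(leq_trans Hlt (setdist_le s (x:=x2) _)) // !inE eqxx ?orbT.
have := setdist_le s HzX; rewrite -Ez => H.
by move: Hne; rewrite eqn_leq H HYle.
Qed.

Lemma gdist_pos s x : x != s -> (0 < gdist adj s x)%N.
Proof. by move=> H; rewrite lt0n; apply/eqP => /gdist0 E; move: H; rewrite E eqxx. Qed.

Lemma sep_solid (S : {set T}) :
  (forall y x1 x2, y \notin S -> x1 != y -> x2 != y ->
    exists2 s, s \in S & (gdist adj s y < gdist adj s x1)%N && (gdist adj s y < gdist adj s x2)%N) ->
  solid2_resolving adj S.
Proof.
move=> Hsep X Y HX HY HXY HcX.
have key : forall (A B : {set T}) s z, A != set0 -> z \in B ->
    (forall x, x \in A -> (gdist adj s z < gdist adj s x)%N) -> setdist adj s A != setdist adj s B.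
  move=> A B s z HA HzB Hz.
  have [xa Hxa Ea] := setdist_ex s HA.
  have := setdist_le s HzB; have := Hz _ Hxa; rewrite -Ea.
  by move=> H1 H2; rewrite neq_ltn (leq_ltn_trans H2 H1) orbT.
case: (boolP [exists y, (y \in Y) && (y \notin X)]).
  move=> /existsP [y /andP [HyY HyX]].
  have [x1 Hx1] := set0Pn _ HX.
  have [x2 Hx2 Hall] : exists2 x2, x2 \in X & forall x, x \in X -> (x == x1) || (x == x2).
    case: (boolP [exists x, (x \in X) && (x != x1)]).
      move=> /existsP [x2 /andP [Hx2 Hne]]; exists x2 => // x Hx.
      apply/negPn/negP; rewrite negb_or => /andP [Ha Hb].
      have := card3 Hx Hx1 Hx2 Ha Hb; rewrite eq_sym Hne ltnNge HcX.
      by move=> /(_ erefl).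
    move=> /existsPn Hn; exists x1 => // x Hx.
    by have := Hn x; rewrite Hx /= negbK => ->.
  have Hny : forall x, x \in X -> x != y.
    by move=> x Hx; apply/eqP => E; move: HyX; rewrite -E Hx.
  case: (boolP (y \in S)) => HyS.
    exists y => //; apply: (key _ _ _ y) => // x Hx; rewrite gdist_refl; exact: gdist_pos (Hny _ Hx).
  have [s Hs /andP [Hs1 Hs2]] := Hsep y x1 x2 HyS (Hny _ Hx1) (Hny _ Hx2).
  exists s => //; apply: (key _ _ _ y) => // x Hx.
  by case/orP: (Hall _ Hx) => /eqP ->.
move=> /existsPn HYX.
have HYsub : {subset Y <= X}.
  by move=> z Hz; have := HYX z; rewrite Hz /= negbK.
have [x HxX HxY] : exists2 x, x \in X & x \notin Y.
  case: (boolP [exists x, (x \in X) && (x \notin Y)]).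
    by move=> /existsP [x /andP [? ?]]; exists x.
  move=> /existsPn H; case/eqP: HXY; apply/eqP; rewrite eqEsubset; apply/andP; split.
    by apply/subsetP => z Hz; have := H z; rewrite Hz /= negbK.
  exact/subsetP.
have [y0 Hy0] := set0Pn _ HY.
have Hxy0 : y0 != x by apply/eqP => E; move: HxY; rewrite -E Hy0.
have HYall : forall z, z \in Y -> z = y0.
  move=> z Hz; apply/eqP/negPn/negP => Hne.
  have Hzx : z != x by apply/eqP => E; move: HxY; rewrite -E Hz.
  have := card3 HxX (HYsub _ Hy0) (HYsub _ Hz); rewrite eq_sym Hxy0 eq_sym Hzx (eq_sym y0) Hne.
  by rewrite ltnNge HcX => /(_ erefl erefl erefl).
have Hne : forall z, z \in Y -> z != x by move=> z /HYall ->.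
case: (boolP (x \in S)) => HxS.
  exists x => //; rewrite eq_sym; apply: (key _ _ _ x) => // z Hz.
  by rewrite gdist_refl; apply: gdist_pos; apply: Hne.
have [s Hs /andP [Hs1 _]] := Hsep x y0 y0 HxS Hxy0 Hxy0.
exists s => //; rewrite eq_sym; apply: (key _ _ _ x) => // z Hz.
by rewrite (HYall _ Hz).
Qed.

End Gen.

Open Scope Z_scope.

Definition dz (n i j : Z) := Z.min (Z.abs (i-j)) (n - Z.abs (i-j)).
Definition Fz (n : Z) (t : nat) (i : Z) (u : nat) (j : Z) : Z :=
 match t, u with
 | O, O => dz n i j
 | O, S O | S O, O => dz n i j + 1
 | O, _ | _, O => dz n i j + 2
 | S O, S O => Z.min (dz n i j + 2) (3 * dz n i j)
 | S O, _ | _, S O => dz n i j + 1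
 | S (S O), S (S O) | S (S (S O)), S (S (S O)) => Z.min (Z.abs (i-j)) (n+2 - Z.abs(i-j))
 | _, _ => Z.min (n - Z.abs(i-j)) (2 + Z.abs(i-j))
 end.

Definition Aarc (n:Z) (t:nat) (i:Z) (u:nat) (j:Z) : Prop :=
 (t = 1%nat /\ u <> 1%nat /\ i = j) \/ (t = 0%nat /\ u = 0%nat /\ (j = i+1 \/ (i = n-1 /\ j = 0)))
 \/ (t = 2%nat /\ u = 2%nat /\ j = i+1) \/ (t = 2%nat /\ u = 3%nat /\ i = n-1 /\ j = 0)
 \/ (t = 3%nat /\ u = 3%nat /\ j = i+1) \/ (t = 3%nat /\ u = 2%nat /\ i = n-1 /\ j = 0).
Definition Arel n t i u j := Aarc n t i u j \/ Aarc n u j t i.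

Ltac d4 t := destruct t as [|[|[|[|t]]]]; [ | | | | exfalso; lia].

Lemma Fz_self n t i : 0 <= n -> (t <= 3)%coq_nat -> Fz n t i t i = 0.
Proof. intros; d4 t; cbn [Fz]; unfold dz; lia. Qed.

Lemma Fz_bound n t i u j : 5 <= n -> (t <= 3)%coq_nat -> (u <= 3)%coq_nat -> 0 <= i < n -> 0 <= j < n ->
  0 <= Fz n t i u j <= n + 2.
Proof. intros; d4 t; d4 u; cbn [Fz]; unfold dz; lia. Qed.

Lemma Fz_lip n t i t1 i1 t2 i2 : 5 <= n -> (t <= 3)%coq_nat -> (t1 <= 3)%coq_nat -> (t2 <= 3)%coq_nat ->
  0 <= i < n -> 0 <= i1 < n -> 0 <= i2 < n -> Arel n t1 i1 t2 i2 ->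
  Fz n t i t2 i2 <= Fz n t i t1 i1 + 1.
Proof. unfold Arel, Aarc; intros; d4 t; d4 t1; d4 t2; cbn [Fz]; unfold dz; lia. Qed.

Ltac tac3 n t i u j t1 j1 t2 j2 t3 j3 :=
  let H := fresh in
  assert (H : Fz n t i t1 j1 + 1 = Fz n t i u j \/ Fz n t i t2 j2 + 1 = Fz n t i u j \/
              Fz n t i t3 j3 + 1 = Fz n t i u j)
    by (d4 t; cbn [Fz]; unfold dz; lia);
  destruct H as [H|[H|H]];
  [exists t1, j1 | exists t2, j2 | exists t3, j3];
  (split; [lia|split; [lia|split; [unfold Arel, Aarc; lia|exact H]]]).

Lemma Fz_pred n t i u j : 5 <= n -> (t <= 3)%coq_nat -> (u <= 3)%coq_nat ->
  0 <= i < n -> 0 <= j < n -> ~ (t = u /\ i = j) ->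
  exists tw jw, (tw <= 3)%coq_nat /\ 0 <= jw < n /\ Arel n tw jw u j /\ Fz n t i tw jw + 1 = Fz n t i u j.
Proof.
intros Hn Ht Hu Hi Hj Hne.
destruct (Z.eq_dec j 0) as [Hj0|Hj0]; [|destruct (Z.eq_dec j (n-1)) as [Hj1|Hj1]].
- d4 u.
  + tac3 n t i 0%nat j 0%nat (j+1) 0%nat (n-1) 1%nat j.
  + tac3 n t i 1%nat j 0%nat j 2%nat j 3%nat j.
  + tac3 n t i 2%nat j 1%nat j 2%nat (j+1) 3%nat (n-1).
  + tac3 n t i 3%nat j 1%nat j 3%nat (j+1) 2%nat (n-1).
- d4 u.
  + tac3 n t i 0%nat j 0%nat 0 0%nat (j-1) 1%nat j.
  + tac3 n t i 1%nat j 0%nat j 2%nat j 3%nat j.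
  + tac3 n t i 2%nat j 1%nat j 3%nat 0 2%nat (j-1).
  + tac3 n t i 3%nat j 1%nat j 2%nat 0 3%nat (j-1).
- d4 u.
  + tac3 n t i 0%nat j 0%nat (j+1) 0%nat (j-1) 1%nat j.
  + tac3 n t i 1%nat j 0%nat j 2%nat j 3%nat j.
  + tac3 n t i 2%nat j 1%nat j 2%nat (j+1) 2%nat (j-1).
  + tac3 n t i 3%nat j 1%nat j 3%nat (j+1) 3%nat (j-1).
Qed.

Definition inSz (h : Z) (t : nat) (i : Z) : Prop :=
  (t = 0%nat /\ (i = 0 \/ i = h \/ i = h+1)) \/ ((t = 2%nat \/ t = 3%nat) /\ (i = 0 \/ i = h)) \/
  (t = 1%nat /\ i <> 0 /\ i <> h).

Definition two3 n t1 i1 t2 i2 t3 i3 ty iy t j :=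
  (Fz n t1 i1 ty iy < Fz n t1 i1 t j /\ Fz n t2 i2 ty iy < Fz n t2 i2 t j) \/
  (Fz n t1 i1 ty iy < Fz n t1 i1 t j /\ Fz n t3 i3 ty iy < Fz n t3 i3 t j) \/
  (Fz n t2 i2 ty iy < Fz n t2 i2 t j /\ Fz n t3 i3 ty iy < Fz n t3 i3 t j).

Lemma two3_of n t1 i1 t2 i2 t3 i3 ty iy t j :
  ~ (Fz n t1 i1 t j <= Fz n t1 i1 ty iy /\ Fz n t2 i2 t j <= Fz n t2 i2 ty iy) ->
  ~ (Fz n t1 i1 t j <= Fz n t1 i1 ty iy /\ Fz n t3 i3 t j <= Fz n t3 i3 ty iy) ->
  ~ (Fz n t2 i2 t j <= Fz n t2 i2 ty iy /\ Fz n t3 i3 t j <= Fz n t3 i3 ty iy) ->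
  two3 n t1 i1 t2 i2 t3 i3 ty iy t j.
Proof. unfold two3; lia. Qed.

Ltac ex3 t1 i1 t2 i2 t3 i3 :=
  exists t1, i1, t2, i2, t3, i3;
  split; [unfold inSz; lia|split; [unfold inSz; lia|split; [unfold inSz; lia|
  split; [lia|split; [lia|split;[lia|split; [lia|split;[lia|split;[lia|]]]]]]]]];
  let t := fresh "t" in let j := fresh "j" in
  intros t j ? ? ?; apply two3_of;
  [ d4 t; cbn [Fz]; unfold dz; lia | d4 t; cbn [Fz]; unfold dz; lia | d4 t; cbn [Fz]; unfold dz; lia ].

Lemma triple n h ty iy : n = 2*h+1 -> 2 <= h -> (ty <= 3)%coq_nat -> 0 <= iy < n -> ~ inSz h ty iy ->
  exists t1 i1 t2 i2 t3 i3, inSz h t1 i1 /\ inSz h t2 i2 /\ inSz h t3 i3 /\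
   (t1 <= 3)%coq_nat /\ (t2 <= 3)%coq_nat /\ (t3 <= 3)%coq_nat /\
   0 <= i1 < n /\ 0 <= i2 < n /\ 0 <= i3 < n /\
   forall t j, (t <= 3)%coq_nat -> 0 <= j < n -> ~ (t = ty /\ j = iy) -> two3 n t1 i1 t2 i2 t3 i3 ty iy t j.
Proof.
intros Hn Hh Hty Hiy HS; unfold inSz in HS.
d4 ty.
- destruct (Z_lt_le_dec iy h).
  + ex3 0%nat 0 0%nat h 1%nat iy.
  + ex3 0%nat 0 0%nat (h+1) 1%nat iy.
- destruct (Z.eq_dec iy 0).
  + ex3 0%nat 0 2%nat 0 3%nat 0.
  + ex3 0%nat h 2%nat h 3%nat h.
- destruct (Z_lt_le_dec iy h).
  + ex3 2%nat 0 2%nat h 1%nat iy.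
  + ex3 3%nat 0 2%nat h 1%nat iy.
- destruct (Z_lt_le_dec iy h).
  + ex3 3%nat 0 3%nat h 1%nat iy.
  + ex3 2%nat 0 3%nat h 1%nat iy.
Qed.

Definition forcing n ty iy (M : nat -> Z -> Prop) :=
  exists tx1 ix1 tx2 ix2, (tx1 <= 3)%coq_nat /\ (tx2 <= 3)%coq_nat /\ 0 <= ix1 < n /\ 0 <= ix2 < n /\
    ~ (tx1 = ty /\ ix1 = iy) /\ ~ (tx2 = ty /\ ix2 = iy) /\
    forall t j, (t <= 3)%coq_nat -> 0 <= j < n -> Fz n t j ty iy < Fz n t j tx1 ix1 ->
      Fz n t j ty iy < Fz n t j tx2 ix2 -> M t j.

Ltac fin tx1 ix1 tx2 ix2 :=
  exists tx1, ix1, tx2, ix2; split; [lia|split;[lia|split;[lia|split;[lia|split;[lia|split;[lia|]]]]]];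
  let t := fresh "t" in let j := fresh "j" in
  intros t j ? ? ? ?; d4 t; cbn [Fz] in *; unfold dz in *; lia.

Lemma force_ab n i : 5 <= n -> 0 <= i < n -> forcing n 1%nat i (fun t j => (t = 0 \/ t = 1)%nat /\ j = i).
Proof.
intros Hn Hi; unfold forcing.
destruct (Z.eq_dec i (n-1)); [|destruct (Z.eq_dec i 0)].
- fin 3%nat 0 3%nat (i-1).
- fin 2%nat (i+1) 2%nat (n-1).
- fin 2%nat (i+1) 3%nat (i-1).
Qed.

Lemma force_bc n i : 5 <= n -> 0 <= i < n -> forcing n 1%nat i (fun t j => (t = 1 \/ t = 2)%nat /\ j = i).
Proof.
intros Hn Hi; unfold forcing.
destruct (Z.eq_dec i (n-1)); [|destruct (Z.eq_dec i 0)].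
- fin 0%nat 0 3%nat (i-1).
- fin 0%nat (i+1) 2%nat (n-1).
- fin 0%nat (i+1) 3%nat (i-1).
Qed.

Lemma force_bd n i : 5 <= n -> 0 <= i < n -> forcing n 1%nat i (fun t j => (t = 1 \/ t = 3)%nat /\ j = i).
Proof.
intros Hn Hi; unfold forcing.
destruct (Z.eq_dec i (n-1)); [|destruct (Z.eq_dec i 0)].
- fin 0%nat 0 2%nat (i-1).
- fin 0%nat (i+1) 3%nat (n-1).
- fin 0%nat (i+1) 2%nat (i-1).
Qed.

Lemma force_awin n h w : n = 2*h+1 -> 2 <= h -> 0 <= w < n ->
  forcing n 0%nat w (fun t j => t = 0%nat /\ ((w <= j < w + h) \/ (j + n < w + h))).
Proof.
intros Hn Hh Hw; unfold forcing.
destruct (Z_lt_le_dec w 2).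
- fin 0%nat (w-2+n) 2%nat w.
- fin 0%nat (w-2) 2%nat w.
Qed.

Definition iwin n h P (t : nat) j :=
  (t = 2%nat /\ ((P <= j < P + h + 1) \/ (j + 2*n < P + h + 1))) \/
  (t = 3%nat /\ ((P <= j + n < P + h + 1) \/ (j + n + 2*n < P + h + 1))).

Lemma force_iwin n h P : n = 2*h+1 -> 2 <= h -> 0 <= P < 2*n ->
  exists ty iy, (ty <= 3)%coq_nat /\ 0 <= iy < n /\ ((ty = 2%nat /\ iy = P) \/ (ty = 3%nat /\ iy + n = P)) /\
  forcing n ty iy (iwin n h P).
Proof.
intros Hn Hh HP; unfold forcing, iwin.
destruct (Z_lt_le_dec P n); [destruct (Z.eq_dec P 0)|destruct (Z.eq_dec P n)].
- exists 2%nat, P; split; [lia|split;[lia|split;[lia|]]]. fin 0%nat P 1%nat (n-1).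
- exists 2%nat, P; split; [lia|split;[lia|split;[lia|]]]. fin 0%nat P 1%nat (P-1).
- exists 3%nat, (P-n); split; [lia|split;[lia|split;[lia|]]]. fin 0%nat (P-n) 1%nat (n-1).
- exists 3%nat, (P-n); split; [lia|split;[lia|split;[lia|]]]. fin 0%nat (P-n) 1%nat (P-n-1).
Qed.

Definition winQ n h W Q := (W <= Q < W + h + 1) \/ (Q + 2*n < W + h + 1).

Lemma iwin_avoid n h P1 P2 P3 : n = 2*h+1 -> 2 <= h -> 0 <= P1 < 2*n -> 0 <= P2 < 2*n -> 0 <= P3 < 2*n ->
  exists P, 0 <= P < 2*n /\ forall Q, 0 <= Q < 2*n -> winQ n h P Q -> Q <> P1 /\ Q <> P2 /\ Q <> P3.
Proof.
intros Hn Hh H1 H2 H3.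
assert (HW : exists W, 1 <= W <= 2*n /\ forall Q, 0 <= Q < 2*n -> winQ n h W Q -> Q <> P1 /\ Q <> P2 /\ Q <> P3).
{ unfold winQ.
  destruct (classic (winQ n h (P1+1) P2 \/ winQ n h (P1+1) P3)) as [C1|C1];
  [destruct (classic (winQ n h (P2+1) P1 \/ winQ n h (P2+1) P3)) as [C2|C2]|]; unfold winQ in *.
  - exists (P3+1); split; [lia|]; intros; lia.
  - exists (P2+1); split; [lia|]; intros; lia.
  - exists (P1+1); split; [lia|]; intros; lia. }
destruct HW as [W [HW1 HW2]].
destruct (Z.eq_dec W (2*n)).
- exists 0; split; [lia|]; intros Q HQ HQw; apply HW2; auto; unfold winQ in *; lia.
- exists W; split; [lia|]; auto.
Qed.

Lemma awin_avoid n h p q : n = 2*h+1 -> 2 <= h -> 0 <= p < n -> 0 <= q < n ->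
  exists w, 0 <= w < n /\ forall j, 0 <= j < n -> ((w <= j < w + h) \/ (j + n < w + h)) -> j <> p /\ j <> q.
Proof.
intros Hn Hh Hp Hq.
assert (HW : exists W, 1 <= W <= n /\ forall j, 0 <= j < n -> ((W <= j < W + h) \/ (j + n < W + h)) -> j <> p /\ j <> q).
{ destruct (classic ((p+1 <= q < p+1+h) \/ (q + n < p+1+h))) as [C|C].
  - exists (q+1); split; [lia|]; intros; lia.
  - exists (p+1); split; [lia|]; intros; lia. }
destruct HW as [W [HW1 HW2]].
destruct (Z.eq_dec W n).
- exists 0; split; [lia|]; intros j Hj Hjw; apply HW2; auto; lia.
- exists W; split; [lia|]; auto.
Qed.

Close Scope Z_scope.

Section J.
Variable n : nat.
Hypothesis Hn : (5 <= n)%N.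

Definition vt (v : Jvert n) : nat := nat_of_ord v.1.
Definition vi (v : Jvert n) : Z := Z.of_nat v.2.
Definition nz : Z := Z.of_nat n.
Definition Fv (s v : Jvert n) : Z := Fz nz (vt s) (vi s) (vt v) (vi v).

Lemma vt_le (v : Jvert n) : (vt v <= 3)%coq_nat.
Proof. apply/leP; rewrite /vt -ltnS; exact: ltn_ord. Qed.
Lemma vi_b (v : Jvert n) : (0 <= vi v < nz)%Z.
Proof. rewrite /vi /nz; have := ltn_ord v.2; lia. Qed.
Lemma nz5 : (5 <= nz)%Z.
Proof. rewrite /nz; lia. Qed.

Lemma eq_modS (i j : nat) : (i < n)%N -> (j == i.+1 %% n) = ((i.+1 < n) && (j == i.+1)) || ((i.+1 == n) && (j == 0%N)).
Proof.
move=> Hi; case: (ltnP i.+1 n) => H.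
  rewrite modn_small //; lia.
have E : i.+1 = n by lia.
rewrite E modnn; lia.
Qed.

Lemma JadjZ (u v : Jvert n) : Jadj u v <-> Arel nz (vt u) (vi u) (vt v) (vi v).
Proof.
rewrite /Jadj /Jarc /Arel /Aarc /vt /vi /nz.
case: u => [[tu Htu] [iu Hiu]]; case: v => [[tv Htv] [iv Hiv]] /=.
rewrite !eq_modS //.
case: tu Htu => [|[|[|[|tu]]]] Htu //; case: tv Htv => [|[|[|[|tv]]]] Htv //=;
  rewrite ?orbF ?andbF ?andbT; split => H; lia.
Qed.


Lemma n0 : (0 < n)%N.
Proof. by apply: leq_trans Hn. Qed.

Definition mkv (t : nat) (k : Z) : Jvert n := (inord t, insubd (Ordinal n0) (Z.to_nat k)).

Lemma vt_mkv t k : (t <= 3)%coq_nat -> vt (mkv t k) = t.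
Proof. move=> H; rewrite /vt /mkv /= inordK //; apply/ltP; lia. Qed.

Lemma vi_mkv t k : (0 <= k < nz)%Z -> vi (mkv t k) = k.
Proof.
move=> H; rewrite /vi /mkv /= val_insubd.
have HH : (Z.to_nat k < n)%N by move: H; rewrite /nz; lia.
rewrite HH; lia.
Qed.

Lemma vert_eq (u v : Jvert n) : vt u = vt v -> vi u = vi v -> u = v.
Proof.
case: u => [tu iu]; case: v => [tv iv]; rewrite /vt /vi /= => H1 H2.
have E1 : tu = tv by apply: val_inj; exact: H1.
have E2 : iu = iv by apply: val_inj => /=; lia.
by rewrite E1 E2.
Qed.

Lemma card_J : #|{: Jvert n}| = (4 * n)%N.
Proof. by rewrite card_prod !card_ord. Qed.

Lemma gdistJ (s v : Jvert n) : Z.of_nat (gdist (@Jadj n) s v) = Fv s v.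
Proof.
apply: gdist_char.
- apply: Fz_self; [have := nz5; lia | exact: vt_le].
- move=> u w /JadjZ H; apply: (Fz_lip nz5 (vt_le s) (vt_le u) (vt_le w) (vi_b s) (vi_b u) (vi_b w) H).
- move=> w Hne.
  have Hn' : ~ (vt s = vt w /\ vi s = vi w).
    by case=> H1 H2; move: Hne; rewrite (vert_eq H1 H2) eqxx.
  have [tw [jw [Htw [Hjw [Har Heq]]]]] := Fz_pred nz5 (vt_le s) (vt_le w) (vi_b s) (vi_b w) Hn'.
  exists (mkv tw jw).
    by apply/JadjZ; rewrite vt_mkv // vi_mkv.
  by rewrite /Fv vt_mkv // vi_mkv.
- move=> w; rewrite card_J.
  have := Fz_bound nz5 (vt_le s) (vt_le w) (vi_b s) (vi_b w).
  rewrite /Fv /nz; lia.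
Qed.

End J.

Section Main.
Variable n : nat.
Hypothesis Hn : (5 <= n)%N.
Hypothesis Hodd : odd n.

Definition h := n./2.
Definition hz := Z.of_nat h.

Lemma hz_ok : (nz n = 2 * hz + 1 /\ 2 <= hz)%Z.
Proof.
have E := odd_double_half n; rewrite Hodd /= -/h -addnn in E.
unfold nz, hz; lia.
Qed.

Lemma Fv_mkv (s : Jvert n) t k : (t <= 3)%coq_nat -> (0 <= k < nz n)%Z ->
  Fv s (mkv Hn t k) = Fz (nz n) (vt s) (vi s) t k.
Proof. by move=> Ht Hk; rewrite /Fv vt_mkv // vi_mkv. Qed.

Lemma ltZ (s x y : Jvert n) : (Fv s y < Fv s x)%Z -> (gdist (@Jadj n) s y < gdist (@Jadj n) s x)%N.
Proof. rewrite -!(gdistJ Hn) => H; apply/ltP; lia. Qed.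
Lemma ltZ' (s x y : Jvert n) : (gdist (@Jadj n) s y < gdist (@Jadj n) s x)%N -> (Fv s y < Fv s x)%Z.
Proof. rewrite -!(gdistJ Hn) => H; lia. Qed.

Lemma mkv_eta (v : Jvert n) : v = mkv Hn (vt v) (vi v).
Proof. apply: (vert_eq Hn); [rewrite vt_mkv //; exact: vt_le | rewrite vi_mkv //; exact: vi_b]. Qed.

Lemma force_use (S : {set Jvert n}) : solid2_resolving (@Jadj n) S ->
  forall ty iy M, (ty <= 3)%coq_nat -> (0 <= iy < nz n)%Z -> forcing (nz n) ty iy M ->
  exists2 s, s \in S & M (vt s) (vi s).
Proof.
move=> HS ty iy M Hty Hiy [tx1 [ix1 [tx2 [ix2 [H1 [H2 [H3 [H4 [H5 [H6 H7]]]]]]]]]].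
have Hne : forall tx ix, (tx <= 3)%coq_nat -> (0 <= ix < nz n)%Z -> ~ (tx = ty /\ ix = iy) ->
    mkv Hn tx ix != mkv Hn ty iy.
  move=> tx ix Htx Hix Hn'; apply/negP => /eqP E; apply: Hn'.
  have := congr1 (@vt n) E; have := congr1 (@vi n) E.
  by rewrite !vt_mkv // !vi_mkv.
have [s Hs /andP [Hs1 Hs2]] := solid_sep HS (Hne _ _ H1 H3 H5) (Hne _ _ H2 H4 H6).
exists s => //.
have := ltZ' Hs1; have := ltZ' Hs2; rewrite !Fv_mkv // => A B.
apply: H7 => //; [exact: vt_le | exact: (vi_b Hn)].
Qed.


Definition fv t (i : 'I_n) : Jvert n := mkv Hn t (Z.of_nat i).

Lemma vi_fv t (i : 'I_n) : vi (fv t i) = Z.of_nat i.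
Proof. rewrite /fv vi_mkv //; have := ltn_ord i; rewrite /nz; lia. Qed.
Lemma vt_fv t (i : 'I_n) : (t <= 3)%N -> vt (fv t i) = t.
Proof. by move=> H; rewrite /fv vt_mkv //; apply/leP. Qed.
Lemma fv_inj t : injective (fv t).
Proof. move=> i j E; have := congr1 (@vi n) E; rewrite !vi_fv => H; apply: val_inj => /=; lia. Qed.
Lemma eq_fv (s : Jvert n) t (i : 'I_n) : vt s = t -> vi s = Z.of_nat i -> s = fv t i.
Proof.
move=> H1 H2; have Ht := vt_le s; rewrite H1 in Ht; move/leP: Ht => Ht.
by apply: (vert_eq Hn); rewrite ?vt_fv ?vi_fv.
Qed.

Section Lower.
Variable S : {set Jvert n}.
Hypothesis HS : solid2_resolving (@Jadj n) S.

Lemma iZ (i : 'I_n) : (0 <= Z.of_nat i < nz n)%Z.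
Proof. have := ltn_ord i; rewrite /nz; lia. Qed.

Lemma star (i : 'I_n) : fv 1 i \notin S -> [/\ fv 0 i \in S, fv 2 i \in S & fv 3 i \in S].
Proof.
move=> Hb.
have H5 := nz5 Hn.
have [sa Hsa [Ha1 Ha2]] := force_use HS (ltac:(lia) : (1 <= 3)%coq_nat) (iZ i) (force_ab H5 (iZ i)).
have [sc Hsc [Hc1 Hc2]] := force_use HS (ltac:(lia) : (1 <= 3)%coq_nat) (iZ i) (force_bc H5 (iZ i)).
have [sd Hsd [Hd1 Hd2]] := force_use HS (ltac:(lia) : (1 <= 3)%coq_nat) (iZ i) (force_bd H5 (iZ i)).
split.
- case: Ha1 => E; first by rewrite -(eq_fv E Ha2).
  by move: Hb; rewrite -(eq_fv E Ha2) Hsa.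
- case: Hc1 => E; last by rewrite -(eq_fv E Hc2).
  by move: Hb; rewrite -(eq_fv E Hc2) Hsc.
- case: Hd1 => E; last by rewrite -(eq_fv E Hd2).
  by move: Hb; rewrite -(eq_fv E Hd2) Hsd.
Qed.

Lemma a_avoid p q : (0 <= p < nz n)%Z -> (0 <= q < nz n)%Z ->
  exists2 s, s \in S & (vt s = 0%N /\ vi s <> p /\ vi s <> q).
Proof.
move=> Hp Hq; have [E Hh] := hz_ok.
have [w [Hw Hav]] := awin_avoid E Hh Hp Hq.
have [s Hs [H1 H2]] := force_use HS (ltac:(lia) : (0 <= 3)%coq_nat) Hw (force_awin E Hh Hw).
exists s => //; split => //; apply: Hav => //; exact: (vi_b Hn).
Qed.

Definition posP (s : Jvert n) Q := (vt s = 2%N /\ Q = vi s) \/ (vt s = 3%N /\ Q = (vi s + nz n)%Z).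

Lemma i_avoid P1 P2 P3 : (0 <= P1 < 2 * nz n)%Z -> (0 <= P2 < 2 * nz n)%Z -> (0 <= P3 < 2 * nz n)%Z ->
  exists2 s, s \in S & exists Q, posP s Q /\ Q <> P1 /\ Q <> P2 /\ Q <> P3.
Proof.
move=> H1 H2 H3; have [E Hh] := hz_ok.
have [P [HP Hav]] := iwin_avoid E Hh H1 H2 H3.
have [ty [iy [Hty [Hiy [_ Hf]]]]] := force_iwin E Hh HP.
have [s Hs Hw] := force_use HS Hty Hiy Hf.
exists s => //.
have Hb := vi_b Hn s.
case: Hw => [[Ht Hw]|[Ht Hw]].
  exists (vi s); split; first by left.
  apply: Hav; rewrite /winQ; lia.
exists (vi s + nz n)%Z; split; first by right.
apply: Hav; rewrite /winQ; lia.
Qed.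

Lemma lower : (n + 5 <= #|S|)%N.
Proof.
set K := [set i : 'I_n | fv 1 i \notin S].
set SA := [set v in S | vt v == 0%N].
set SB := [set v in S | vt v == 1%N].
set SI := [set v in S | (2 <= vt v)%N].
have Hsub : SA :|: SB :|: SI \subset S.
  by apply/subsetP => v; rewrite !inE -!andb_orr => /andP [].
have Hc : #|SA :|: SB :|: SI| = (#|SA| + #|SB| + #|SI|)%N.
  rewrite (@card_disjU _ (SA :|: SB) SI); last first.
    by move=> x; rewrite !inE => /orP [] /andP [_ /eqP ->]; rewrite andbF.
  rewrite (@card_disjU _ SA SB) //.
  by move=> x; rewrite !inE => /andP [_ /eqP ->]; rewrite andbF.
have HS1 := subset_leq_card Hsub; rewrite Hc in HS1.
have HB : (n - #|K| <= #|SB|)%N.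
  have Hs : [set fv 1 i | i in ~: K] \subset SB.
    apply/subsetP => v /imsetP [i]; rewrite !inE negbK => Hi ->.
    by rewrite Hi vt_fv.
  have := subset_leq_card Hs; rewrite card_imset; last exact: fv_inj.
  have := cardsC K; rewrite card_ord => E H; apply: leq_trans H; rewrite -[X in (X - _)%N]E addKn; exact: leqnn.
have HA : (#|K| <= #|SA|)%N.
  have Hs : [set fv 0 i | i in K] \subset SA.
    apply/subsetP => v /imsetP [i]; rewrite !inE => Hi ->.
    by have [-> _ _] := star Hi; rewrite vt_fv.
  by have := subset_leq_card Hs; rewrite card_imset //; exact: fv_inj.
have HI : (#|K| + #|K| <= #|SI|)%N.
  have Hs : [set fv 2 i | i in K] :|: [set fv 3 i | i in K] \subset SI.
    apply/subsetP => v; rewrite inE => /orP [] /imsetP [i]; rewrite !inE => Hi ->;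
      by have [_ H2 H3] := star Hi; rewrite ?H2 ?H3 vt_fv.
  have := subset_leq_card Hs; rewrite card_disjU ?card_imset //; try exact: fv_inj.
  by move=> x /imsetP [i _ ->]; apply/imsetP => [[j _ E]]; have := congr1 (@vt n) E; rewrite !vt_fv.
have HA3 : (2 < #|SA|)%N.
  have Hb0 : (0 <= 0 < nz n)%Z by have := nz5 Hn; lia.
  have [s1 Hs1 [T1 _]] := a_avoid Hb0 Hb0.
  have [s2 Hs2 [T2 [D2 _]]] := a_avoid (vi_b Hn s1) (vi_b Hn s1).
  have [s3 Hs3 [T3 [D3 D3']]] := a_avoid (vi_b Hn s1) (vi_b Hn s2).
  have Hne : forall u v : Jvert n, vi u <> vi v -> u != v.
    by move=> u v H; apply/negP => /eqP E; apply: H; rewrite E.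
  apply: (@card3 _ _ s1 s2 s3); rewrite ?inE ?Hs1 ?Hs2 ?Hs3 ?T1 ?T2 ?T3 //; apply: Hne => //.
  - by move=> E; apply: D2; rewrite E.
  - by move=> E; apply: D3; rewrite E.
  - by move=> E; apply: D3'; rewrite E.
have HI4 : (3 < #|SI|)%N.
  have HnP := nz5 Hn.
  have Hb0 : (0 <= 0 < 2 * nz n)%Z by lia.
  have HP : forall s Q, posP s Q -> (0 <= Q < 2 * nz n)%Z.
    by move=> s Q; have := vi_b Hn s; rewrite /posP; lia.
  have HSI : forall s Q, s \in S -> posP s Q -> s \in SI.
    by move=> s Q Hs; rewrite /posP !inE Hs /=; case=> [[-> _]|[-> _]].
  have Hne : forall u v Qu Qv, posP u Qu -> posP v Qv -> Qu <> Qv -> u != v.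
    move=> u v Qu Qv Hu Hv H; apply/negP => /eqP E; apply: H; rewrite E in Hu.
    by move: Hu Hv; rewrite /posP; lia.
  have [s1 Hs1 [Q1 [R1 _]]] := i_avoid Hb0 Hb0 Hb0.
  have [s2 Hs2 [Q2 [R2 [D21 _]]]] := i_avoid (HP _ _ R1) (HP _ _ R1) (HP _ _ R1).
  have [s3 Hs3 [Q3 [R3 [D31 [D32 _]]]]] := i_avoid (HP _ _ R1) (HP _ _ R2) (HP _ _ R2).
  have [s4 Hs4 [Q4 [R4 [D41 [D42 D43]]]]] := i_avoid (HP _ _ R1) (HP _ _ R2) (HP _ _ R3).
  apply: (card4 (HSI _ _ Hs1 R1) (HSI _ _ Hs2 R2) (HSI _ _ Hs3 R3) (HSI _ _ Hs4 R4)).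
  - by apply: (Hne _ _ _ _ R1 R2) => E; apply: D21.
  - by apply: (Hne _ _ _ _ R1 R3) => E; apply: D31.
  - by apply: (Hne _ _ _ _ R2 R3) => E; apply: D32.
  - exact: (Hne _ _ _ _ R4 R1).
  - exact: (Hne _ _ _ _ R4 R2).
  - exact: (Hne _ _ _ _ R4 R3).
have HK : (#|K| <= n)%N by rewrite -[X in (_ <= X)%N]card_ord; apply: subset_leq_card; apply/subsetP.
lia.
Qed.

End Lower.

Section Upper.

Lemma hE : n = (h + h).+1.
Proof. have E := odd_double_half n; rewrite Hodd /= -/h -addnn in E; lia. Qed.
Lemma hlt : (h < n)%N.
Proof. have := hE; lia. Qed.
Lemma h1lt : (h.+1 < n)%N.
Proof. have := hE; have := Hn; lia. Qed.

Definition o0 : 'I_n := Ordinal (n0 Hn).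
Definition oh : 'I_n := Ordinal hlt.
Definition oh1 : 'I_n := Ordinal h1lt.

Definition inSb (v : Jvert n) : bool :=
  let i := nat_of_ord v.2 in
  [|| (vt v == 0%N) && [|| i == 0%N, i == h | i == h.+1],
      ((vt v == 2%N) || (vt v == 3%N)) && ((i == 0%N) || (i == h)) |
      (vt v == 1%N) && (i != 0%N) && (i != h)].

Definition Sup : {set Jvert n} := [set v | inSb v].

Lemma inS_iff v : v \in Sup <-> inSz hz (vt v) (vi v).
Proof.
rewrite inE /inSb /inSz /vi /hz.
move: (vt v) (vt_le v) => t Ht.
case: t Ht => [|[|[|[|t]]]] Ht /=; try lia.
Qed.

Lemma Sup_solid : solid2_resolving (@Jadj n) Sup.
Proof.
apply: sep_solid => y x1 x2 Hy Hx1 Hx2.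
have [E Hh] := hz_ok.
have HyS : ~ inSz hz (vt y) (vi y) by move=> /inS_iff H; rewrite H in Hy.
have [t1 [i1 [t2 [i2 [t3 [i3 [S1 [S2 [S3 [T1 [T2 [T3 [I1 [I2 [I3 Hall]]]]]]]]]]]]]]] :=
  triple E Hh (vt_le y) (vi_b Hn y) HyS.
have Hxne : forall x : Jvert n, x != y -> ~ (vt x = vt y /\ vi x = vi y).
  by move=> x Hx [A B]; move: Hx; rewrite (vert_eq Hn A B) eqxx.
have A1 := Hall _ _ (vt_le x1) (vi_b Hn x1) (Hxne _ Hx1).
have A2 := Hall _ _ (vt_le x2) (vi_b Hn x2) (Hxne _ Hx2).
have Hin : forall t i, (t <= 3)%coq_nat -> (0 <= i < nz n)%Z -> inSz hz t i -> mkv Hn t i \in Sup.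
  by move=> t i Ht Hi H; apply/inS_iff; rewrite vt_mkv // vi_mkv.
have Hsep : forall t i x, (t <= 3)%coq_nat -> (0 <= i < nz n)%Z ->
    (Fz (nz n) t i (vt y) (vi y) < Fz (nz n) t i (vt x) (vi x))%Z ->
    (gdist (@Jadj n) (mkv Hn t i) y < gdist (@Jadj n) (mkv Hn t i) x)%N.
  by move=> t i x Ht Hi H; apply: ltZ; rewrite /Fv vt_mkv // vi_mkv.
rewrite /two3 in A1 A2.
have : ((Fz (nz n) t1 i1 (vt y) (vi y) < Fz (nz n) t1 i1 (vt x1) (vi x1) /\ Fz (nz n) t1 i1 (vt y) (vi y) < Fz (nz n) t1 i1 (vt x2) (vi x2)) \/
        (Fz (nz n) t2 i2 (vt y) (vi y) < Fz (nz n) t2 i2 (vt x1) (vi x1) /\ Fz (nz n) t2 i2 (vt y) (vi y) < Fz (nz n) t2 i2 (vt x2) (vi x2)) \/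
        (Fz (nz n) t3 i3 (vt y) (vi y) < Fz (nz n) t3 i3 (vt x1) (vi x1) /\ Fz (nz n) t3 i3 (vt y) (vi y) < Fz (nz n) t3 i3 (vt x2) (vi x2)))%Z
  by tauto.
case=> [[B1 B2]|[[B1 B2]|[B1 B2]]].
- by exists (mkv Hn t1 i1); [exact: Hin | rewrite !Hsep].
- by exists (mkv Hn t2 i2); [exact: Hin | rewrite !Hsep].
- by exists (mkv Hn t3 i3); [exact: Hin | rewrite !Hsep].
Qed.


Lemma eqv_fv (v : Jvert n) t (i : 'I_n) : (t <= 3)%N ->
  (v == fv t i) = (vt v == t) && (nat_of_ord v.2 == nat_of_ord i).
Proof.
move=> Ht; apply/eqP/andP => [->|[/eqP A /eqP B]].
  have := vi_fv t i; rewrite /vi => C.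
  by rewrite vt_fv //; split => //; apply/eqP; lia.
by apply: eq_fv => //; rewrite /vi B.
Qed.

Definition e7 : seq (Jvert n) := [:: fv 0 o0; fv 0 oh; fv 0 oh1; fv 2 o0; fv 3 o0; fv 2 oh; fv 3 oh].
Definition Kp : {set 'I_n} := ~: [set o0; oh].
Definition Bp : {set Jvert n} := [set fv 1 i | i in Kp].

Lemma Sup_sub : Sup \subset [set x in e7] :|: Bp.
Proof.
apply/subsetP => v /inS_iff; rewrite /inSz /vi /hz => H.
have Ht := vt_le v.
case: (boolP (vt v == 1%N)) => [/eqP H1|H1].
  rewrite inE; apply/orP; right; apply/imsetP; exists v.2.
    rewrite !inE; apply/negP => /orP [] /eqP E; rewrite E /= in H; lia.
  by apply: eq_fv.
rewrite inE; apply/orP; left; rewrite inE /e7 !inE !eqv_fv //=.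
move/eqP: H1 => H1; lia.
Qed.

Lemma Sup_card : (#|Sup| <= n + 5)%N.
Proof.
apply: leq_trans (subset_leq_card Sup_sub) _.
rewrite cardsU; apply: leq_trans (leq_subr _ _) _.
have H1 : (#|[set x in e7]| <= 7)%N by rewrite cardsE; apply: card_size.
have H2 : (#|Bp| <= n - 2)%N.
  apply: leq_trans (leq_imset_card _ _) _.
  have := cardsC [set o0; oh]; rewrite card_ord cards2.
  have -> : (o0 != oh) by apply/negP => /eqP E; have := congr1 val E => /=; have := hE; lia.
  by rewrite /Kp => E; rewrite -[X in (_ <= X - _)%N]E /= addKn.
apply: leq_trans (leq_add H1 H2) _; have := Hn; lia.
Qed.
End Upper.
End Main.

Theorem mainTheorem16 (n : nat) (Hn : 5 <= n) (Hodd : odd n) :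
  (exists S : {set Jvert n}, solid2_resolving (@Jadj n) S /\ #|S| = n + 5) /\
  (forall S : {set Jvert n}, solid2_resolving (@Jadj n) S -> n + 5 <= #|S|).
Proof.
split.
  exists (Sup n); split; first exact: (Sup_solid Hn Hodd).
  apply/eqP; rewrite eqn_leq (Sup_card Hn Hodd) /=.
  exact: (lower Hn Hodd (Sup_solid Hn Hodd)).
move=> S HS; exact: (lower Hn Hodd HS).
Qed.
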